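(* Let $N=\{1,\ldots,n\}$, let $\mathscr{B}_1,\ldots,\mathscr{B}_p\in\mathfrak{B}^*(n)$, let $\mathscr{F}_k=\{v\in\mathscr{BG}(n):\sum_{S\in\mathscr{B}_k}\lambda^{\mathscr{B}_k}_Sv(S)=v(N)\}$ be the facet of $\mathscr{BG}(n)$ associated with $\mathscr{B}_k$, and consider the face $\mathscr{F}=\mathscr{F}_1\cap\cdots\cap\mathscr{F}_p$. Then every game in $\mathscr{F}$ has a core reduced to a single point if and only if the rank of the family of vectors $\{\mathbf{1}^S: S\in\mathscr{B}_1\cup\cdots\cup\mathscr{B}_p\}$ is $n$.
   Context: A game on $N$ is a map $v:2^N\to\mathbb{R}$ with $v(\varnothing)=0$. $\mathbf{1}^S\in\mathbb{R}^N$ is the characteristic vector of $S$. The core is $C(v)=\{x\in\mathbb{R}^N:\sum_{i\in S}x_i\geqslant v(S)\ \forall S,\ \sum_{i\in N}x_i=v(N)\}$. A collection $\mathscr{B}$ of nonempty subsets of $N$ is balanced if there exist positive weights $(\lambda_S)_{S\in\mathscr{B}}$ with $\sum_{S\in\mathscr{B},S\ni i}\lambda_S=1$ for all $i$; minimal balanced if no proper subcollection is balanced, with unique weights $\lambda^{\mathscr{B}}_S$. $\mathfrak{B}^*(n)$ is the set of minimal balanced collections other than $\{N\}$. $\mathscr{BG}(n)=\{v:\sum_{S\in\mathscr{B}}\lambda^{\mathscr{B}}_Sv(S)\leqslant v(N)\ \forall\mathscr{B}\in\mathfrak{B}^*(n)\}$. *)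

(* Defs.v *)
(* Players N = 'I_n (i.e. {0,...,n-1} standing for {1,...,n}). *)
From HB Require Import structures.
From mathcomp Require Import all_boot all_order all_algebra.
From Stdlib Require Import ClassicalEpsilon.
Set Implicit Arguments. Unset Strict Implicit. Unset Printing Implicit Defensive.
Import Order.TTheory GRing.Theory Num.Theory.
Local Open Scope ring_scope.

Section Games.
Variables (R : realFieldType) (n : nat).

Definition is_game (v : {set 'I_n} -> R) : Prop := v set0 = 0.

Definition charvec (S : {set 'I_n}) : 'rV[R]_n := \row_(j < n) (j \in S)%:R.

Definition in_core (v : {set 'I_n} -> R) (x : 'rV[R]_n) : Prop :=
  (forall S : {set 'I_n}, v S <= \sum_(i in S) x 0 i) /\
  \sum_(i < n) x 0 i = v setT.

Definition balancing_weights (B : {set {set 'I_n}}) (lam : {set 'I_n} -> R) : Prop :=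
  (forall S, S \in B -> 0 < lam S) /\
  (forall i : 'I_n, \sum_(S in B | i \in S) lam S = 1).

Definition balanced (B : {set {set 'I_n}}) : Prop :=
  set0 \notin B /\ exists lam, balancing_weights B lam.

Definition minimal_balanced (B : {set {set 'I_n}}) : Prop :=
  balanced B /\ forall B' : {set {set 'I_n}}, B' \proper B -> ~ balanced B'.

Definition Bstar (B : {set {set 'I_n}}) : Prop :=
  minimal_balanced B /\ B <> [set setT].

(* the (unique, for minimal balanced B) weights lambda^B *)
Definition lambdaB (B : {set {set 'I_n}}) : {set 'I_n} -> R :=
  epsilon (inhabits (fun _ => 0)) (balancing_weights B).

Definition Bsum (B : {set {set 'I_n}}) (v : {set 'I_n} -> R) : R :=
  \sum_(S in B) lambdaB B S * v S.

Definition BG (v : {set 'I_n} -> R) : Prop :=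
  is_game v /\ forall B, Bstar B -> Bsum B v <= v setT.

Definition facet (B : {set {set 'I_n}}) (v : {set 'I_n} -> R) : Prop :=
  BG v /\ Bsum B v = v setT.

Definition core_singleton (v : {set 'I_n} -> R) : Prop :=
  exists x, in_core v x /\ forall y, in_core v y -> y = x.

Definition charmx (U : {set {set 'I_n}}) : 'M[R]_(#|U|, n) :=
  \matrix_(i < #|U|) charvec (enum_val i).

End Games.

(* Main.v *)
Require Import Defs.
From HB Require Import structures.
From mathcomp Require Import all_boot all_order all_algebra.
From mathcomp Require Import lra.
From Stdlib Require Import Classical ClassicalEpsilon.
Set Implicit Arguments. Unset Strict Implicit. Unset Printing Implicit Defensive.
Import Order.TTheory GRing.Theory Num.Theory.
Local Open Scope ring_scope.

Section Farkas.
Variable R : realFieldType.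

Definition dot m (a x : nat -> R) := \sum_(k < m) a k * x k.

Lemma sep_lem (I : finType) (P Q : pred I) (f g : I -> R) :
  (forall i j, P i -> Q j -> f i <= g j) ->
  exists t, (forall i, P i -> f i <= t) /\ (forall j, Q j -> t <= g j).
Proof.
move=> H. case: (pickP P) => [i0 Pi0|P0].
  case: (arg_maxP f Pi0) => i Pi Hi. exists (f i); split=> [j Pj|j Qj]; last exact: H.
  exact: Hi.
case: (pickP Q) => [j0 Qj0|Q0].
  case: (arg_minP g Qj0) => j Qj Hj. exists (g j); split => [i Pi|i Qi]; last exact: Hj.
  by rewrite P0 in Pi.
exists 0; split=> i; by rewrite ?P0 ?Q0.
Qed.

Lemma delta_sum (I : finType) (i : I) (r : I -> R) :
  \sum_l (l == i)%:R * r l = r i.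
Proof.
rewrite (bigD1 i) //= eqxx mul1r big1 ?addr0 // => l /negbTE ->; by rewrite mul0r.
Qed.

Lemma delta2_sum (I : finType) (i j : I) (u w : R) (r : I -> R) :
  \sum_l (u * (l == j)%:R - w * (l == i)%:R) * r l = u * r j - w * r i.
Proof.
rewrite (eq_bigr (fun l => u * ((l == j)%:R * r l) - w * ((l == i)%:R * r l))); last first.
  by move=> l _; rewrite mulrBl !mulrA.
by rewrite sumrB -!big_distrr /= !delta_sum.
Qed.

Lemma farkas m : forall (I : finType) (a : I -> nat -> R) (b : I -> R),
  (forall x, exists i, dot m (a i) x < b i) ->
  exists y : I -> R, (forall i, 0 <= y i) /\
    (forall k, (k < m)%N -> \sum_i y i * a i k = 0) /\ 0 < \sum_i y i * b i.
Proof.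
elim: m => [|m IH] I a b H.
  case: (H (fun _ => 0)) => i; rewrite /dot big_ord0 => hi.
  exists (fun j => (j == i)%:R); split; first by move=> j; rewrite ler0n.
  split => //. by rewrite delta_sum.
pose c := fun i => a i m.
pose coef (o : (I + (I * I))%type) (l : I) : R :=
  match o with
  | inl i => if c i == 0 then (l == i)%:R else 0
  | inr (i, j) => if (0 < c i) && (c j < 0) then c i * (l == j)%:R - c j * (l == i)%:R else 0
  end.
have coef_ge0 : forall o l, 0 <= coef o l.
  move=> [i|[i j]] l /=; first by case: ifP; rewrite ?ler0n.
  case: ifP => // /andP[hi hj]. rewrite subr_ge0; apply: (@le_trans _ _ 0).
    by apply: mulr_le0_ge0; rewrite ?ler0n ?ltW.
  by apply: mulr_ge0; rewrite ?ler0n ?ltW.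
have key : forall (r : I -> R) (y' : _ -> R),
    \sum_o y' o * (\sum_l coef o l * r l) = \sum_l (\sum_o y' o * coef o l) * r l.
  move=> r y'. rewrite (eq_bigr (fun o => \sum_l y' o * coef o l * r l)); last first.
    by move=> o _; rewrite big_distrr; apply eq_bigr => l _ /=; rewrite mulrA.
  rewrite exchange_big; apply eq_bigr => l _; by rewrite big_distrl.
have coefE : forall (r : I -> R) o, \sum_l coef o l * r l =
   match o with
  | inl i => if c i == 0 then r i else 0
  | inr (i, j) => if (0 < c i) && (c j < 0) then c i * r j - c j * r i else 0
  end.
  move=> r [i|[i j]] /=.
    case: ifP => _; first exact: delta_sum.
    by rewrite big1 // => l _; rewrite mul0r.
  case: ifP => _; first exact: delta2_sum.
  by rewrite big1 // => l _; rewrite mul0r.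
have [y' [y'0 [y'a y'b]]] : exists y' : (I + (I * I))%type -> R, (forall o, 0 <= y' o) /\
    (forall k, (k < m)%N -> \sum_o y' o * (\sum_l coef o l * a l k) = 0) /\
    0 < \sum_o y' o * (\sum_l coef o l * b l).
  apply: (IH _ (fun o k => \sum_l coef o l * a l k) (fun o => \sum_l coef o l * b l)).
  move=> x; apply: NNPP => Hn.
  have Hall : forall o, \sum_l coef o l * b l <= dot m (fun k => \sum_l coef o l * a l k) x.
    move=> o; rewrite leNgt; apply/negP => ho; apply: Hn; by exists o.
  have dotE : forall o, dot m (fun k => \sum_l coef o l * a l k) x =
      \sum_l coef o l * dot m (a l) x.
    move=> o; rewrite /dot.
    rewrite (eq_bigr (fun k : 'I_m => \sum_l coef o l * (a l k * x k))); last first.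
      by move=> k _; rewrite big_distrl; apply eq_bigr => l _; rewrite mulrA.
    rewrite exchange_big; apply eq_bigr => l _; by rewrite big_distrr.
  have HS : forall i j, 0 < c i -> c j < 0 ->
      (b i - dot m (a i) x) / c i <= (b j - dot m (a j) x) / c j.
    move=> i j /= hi hj. have := Hall (inr (i, j)). rewrite dotE !coefE /= hi hj /=.
    move=> h. rewrite ler_ndivlMr // mulrAC ler_pdivlMr //. lra.
  have [t [Ht1 Ht2]] := @sep_lem I (fun i => 0 < c i) (fun j => c j < 0)
     (fun i => (b i - dot m (a i) x) / c i) (fun j => (b j - dot m (a j) x) / c j) HS.
  pose x' := fun k => if (k == m)%N then t else x k.
  have [i hi] := H x'.
  have : dot m.+1 (a i) x' = dot m (a i) x + c i * t.
    rewrite /dot big_ord_recr /= /x' eqxx; congr (_ + _).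
    by apply eq_bigr => k _; rewrite (ltn_eqF (ltn_ord k)).
  move=> E; rewrite E in hi.
  case: (ltrgtP (c i) 0) => hc.
  - have := Ht2 i hc. rewrite /= ler_ndivlMr //. lra.
  - have := Ht1 i hc. rewrite /= ler_pdivrMr //. lra.
  - have := Hall (inl i). rewrite dotE !coefE /= hc eqxx. rewrite hc in hi. lra.
exists (fun l => \sum_o y' o * coef o l); split; [|split].
- by move=> l; apply: sumr_ge0 => o _; apply: mulr_ge0.
- move=> k hk. rewrite -key. rewrite ltnS leq_eqVlt in hk. case/orP: hk => [/eqP ->|hk].
    apply: big1 => o _. rewrite coefE. case: o => [i|[i j]].
      by case: ifP => [/eqP h|]; rewrite ?mulr0 //; rewrite [a i m]h mulr0.
    by case: ifP; rewrite ?mulr0 // => _; rewrite [a j m * _]mulrC subrr mulr0.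
  exact: y'a.
- by rewrite -key.
Qed.

End Farkas.



Section Bal.
Variables (R : realFieldType) (n : nat).
Implicit Types (B : {set {set 'I_n}}) (w d : {set 'I_n} -> R).

Lemma bal_sum B lam (g : 'I_n -> R) : balancing_weights B lam ->
  \sum_(S in B) lam S * \sum_(i in S) g i = \sum_i g i.
Proof.
move=> [_ hw].
rewrite (eq_bigr (fun S : {set 'I_n} => \sum_(i : 'I_n) (if i \in S then lam S * g i else 0))); last first.
  by move=> S _; rewrite big_distrr big_mkcond.
rewrite exchange_big; apply: eq_bigr => i _.
rewrite -big_mkcondr -big_distrl /= hw mul1r //.
Qed.

Lemma bal_lambdaB B : balanced R B -> balancing_weights B (lambdaB R B).
Proof. by case=> _ [lam H]; rewrite /lambdaB; apply: epsilon_spec; exists lam. Qed.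

Lemma d_zero B d : set0 \notin B -> (forall i, \sum_(S in B | i \in S) d S = 0) ->
  (forall S, S \in B -> d S <= 0) -> forall S, S \in B -> d S = 0.
Proof.
move=> h0 hs hle S SB.
have : S != set0 by apply: contraNneq h0 => <-.
case/set0Pn => i iS.
have H := hs i. move/eqP: H; rewrite -oppr_eq0 -sumrN => /eqP H.
have hyp : forall T, (T \in B) && (i \in T) -> 0 <= - d T.
  by move=> T /andP[TB _]; rewrite oppr_ge0 hle.
have HS : (S \in B) && (i \in S) by rewrite SB iS.
have := psumr_eq0P hyp H HS. by move/eqP; rewrite oppr_eq0 => /eqP.
Qed.

Lemma line B w d : (forall S, S \in B -> 0 < w S) -> (exists2 S, S \in B & 0 < d S) ->
  exists t, 0 < t /\ (forall S, S \in B -> 0 <= w S - t * d S) /\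
    exists2 S, S \in B & w S - t * d S = 0.
Proof.
move=> hw [S1 S1B hS1].
have P1 : (S1 \in B) && (0 < d S1) by rewrite S1B hS1.
case: (@arg_minP _ _ _ S1 (fun S => (S \in B) && (0 < d S)) (fun S => w S / d S) P1) => S0 /andP[S0B hd0] Hmin.
exists (w S0 / d S0); split; first by rewrite divr_gt0 // hw.
split.
  move=> S SB. case: (ltrP 0 (d S)) => hd.
    have := Hmin S; rewrite SB hd => /(_ isT). rewrite ler_pdivlMr // subr_ge0 //.
  rewrite subr_ge0; apply: (@le_trans _ _ 0); last by rewrite ltW // hw.
  by apply: mulr_ge0_le0 => //; rewrite ltW // divr_gt0 // hw.
by exists S0 => //; rewrite divfK ?subrr // gt_eqF.
Qed.

Lemma sub_line B w d t (g : {set 'I_n} -> R) : set0 \notin B -> balancing_weights B w ->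
  (forall i, \sum_(S in B | i \in S) d S = 0) ->
  (forall S, S \in B -> 0 <= w S - t * d S) -> (exists2 S, S \in B & w S - t * d S = 0) ->
  let B1 := [set S in B | 0 < w S - t * d S] in
  [/\ B1 \proper B, balancing_weights B1 (fun S => w S - t * d S) &
    \sum_(S in B1) (w S - t * d S) * g S = \sum_(S in B) (w S - t * d S) * g S].
Proof.
move=> h0 [hwp hw] hd hge [S0 S0B hS0] B1.
have drop : forall (P : pred {set 'I_n}) (F : {set 'I_n} -> R),
    (forall S, S \in B -> w S - t * d S = 0 -> F S = 0) ->
    \sum_(S in B1 | P S) F S = \sum_(S in B | P S) F S.
  move=> P F HF. rewrite big_mkcond [RHS]big_mkcond; apply: eq_bigr => S _.
  rewrite /B1 inE. case SB: (S \in B) => //=. case: ltP => //= h.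
  case: (P S) => //. rewrite HF //. apply/le_anti; rewrite h hge //.
split.
- apply/properP; split; first by apply/subsetP => S; rewrite inE => /andP[].
  by exists S0 => //; rewrite inE S0B hS0 ltxx.
- split; first by move=> S; rewrite inE => /andP[].
  move=> i. rewrite (drop (fun S => i \in S)) //.
  by rewrite sumrB hw -big_distrr /= hd mulr0 subr0.
- rewrite big_mkcond [RHS]big_mkcond; apply: eq_bigr => S _.
  rewrite /B1 inE. case SB: (S \in B) => //=. case: ltP => //= h.
  have -> : w S - t * d S = 0 by apply/le_anti; rewrite h hge.
  by rewrite mul0r.
Qed.

Lemma split_lem B w d (g : {set 'I_n} -> R) c : set0 \notin B -> balancing_weights B w ->
  (forall i, \sum_(S in B | i \in S) d S = 0) -> (exists2 S0, S0 \in B & d S0 != 0) ->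
  c < \sum_(S in B) w S * g S ->
  exists B1 w1, [/\ B1 \proper B, balancing_weights B1 w1 &
     c < \sum_(S in B1) w1 S * g S].
Proof.
move=> h0 hw hd [S0 S0B hS0] hc.
have pos : exists2 S, S \in B & 0 < d S.
  apply: NNPP => H. move/eqP: hS0; apply. apply: (d_zero h0 hd) => // S SB.
  rewrite leNgt; apply/negP => h; apply: H; by exists S.
have neg : exists2 S, S \in B & 0 < - d S.
  apply: NNPP => H. move/eqP: hS0; apply. apply/eqP; rewrite -oppr_eq0; apply/eqP.
  apply: (d_zero (d := fun S => - d S) h0) => //.
    by move=> i; rewrite sumrN hd oppr0.
  move=> S SB. rewrite leNgt; apply/negP => h; apply: H; by exists S.
have [t [ht [hge1 hz1]]] := line hw.1 pos.
have [s [hs [hge2 hz2]]] := line hw.1 neg.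
have hd' : forall i, \sum_(S in B | i \in S) - d S = 0 by move=> i; rewrite sumrN hd oppr0.
have [p1 bw1 e1] := sub_line g h0 hw hd hge1 hz1.
have [p2 bw2 e2] := sub_line g h0 hw hd' hge2 hz2.
set X := \sum_(S in B) w S * g S in hc.
set D := \sum_(S in B) d S * g S.
have E1 : \sum_(S in B) (w S - t * d S) * g S = X - t * D.
  rewrite /X /D big_distrr -sumrB; apply: eq_bigr => S _ /=; rewrite mulrBl mulrA //.
have E2 : \sum_(S in B) (w S - s * - d S) * g S = X + s * D.
  rewrite /X /D big_distrr -big_split; apply: eq_bigr => S _ /=.
  rewrite mulrN opprK mulrDl mulrA //.
case: (ltrP c (X - t * D)) => h1.
  by exists [set S in B | 0 < w S - t * d S], (fun S => w S - t * d S); split; rewrite ?e1 ?E1.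
case: (ltrP c (X + s * D)) => h2.
  by exists [set S in B | 0 < w S - s * - d S], (fun S => w S - s * - d S); split; rewrite ?e2 ?E2.
exfalso.
have : s * (X - t * D) + t * (X + s * D) <= s * c + t * c.
  by apply: lerD; rewrite ler_pM2l.
have -> : s * (X - t * D) + t * (X + s * D) = (s + t) * X.
  by rewrite mulrBr mulrDr mulrDl !mulrA [t * s]mulrC; lra.
rewrite -mulrDl ler_pM2l ?addr_gt0 // => hX. lra.
Qed.

End Bal.



Section Red.
Variables (R : realFieldType) (n : nat).
Implicit Types (B : {set {set 'I_n}}) (w d : {set 'I_n} -> R).

Lemma lambda_unique B w1 w2 : minimal_balanced R B -> balancing_weights B w1 ->
  balancing_weights B w2 -> forall S, S \in B -> w1 S = w2 S.
Proof.
move=> [[h0 _] hmin] hw1 hw2 S SB. apply: NNPP => hne.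
have hd : forall i, \sum_(T in B | i \in T) (w1 T - w2 T) = 0.
  by move=> i; rewrite sumrB hw1.2 hw2.2 subrr.
have hS : exists2 S0, S0 \in B & w1 S0 - w2 S0 != 0.
  by exists S => //; rewrite subr_eq0; apply/eqP.
have hc : -1 < \sum_(T in B) w1 T * (fun _ => 0 : R) T.
  by rewrite big1 ?ltrN10 // => T _; rewrite mulr0.
have [B1 [w1' [hp hb _]]] := split_lem h0 hw1 hd hS hc.
apply: (hmin B1 hp). split; last by exists w1'.
apply: contra h0. exact: (subsetP (proper_sub hp)).
Qed.

Lemma reduce (g : {set 'I_n} -> R) c : forall B w, set0 \notin B -> balancing_weights B w ->
  c < \sum_(S in B) w S * g S -> exists B', minimal_balanced R B' /\ c < Bsum B' g.
Proof.
move=> B; have [k] := ubnP #|B|; elim: k B => // k IH B hk w h0 hw hc.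
case: (classic (minimal_balanced R B)) => [hm|hnm].
  exists B; split => //. rewrite /Bsum.
  have hl := bal_lambdaB hm.1.
  rewrite (eq_bigr (fun S => w S * g S)) // => S SB.
  by rewrite (lambda_unique hm hl hw SB).
have [B'' [hp [hb0 [mu hmu]]]] : exists B'', B'' \proper B /\ balanced R B''.
  apply: NNPP => H; apply: hnm; split; first by split => //; exists w.
  move=> B' hp hb; apply: H; by exists B'.
have hsub := proper_sub hp.
pose d := fun S => (if S \in B'' then mu S else 0) - w S.
have hd : forall i, \sum_(S in B | i \in S) d S = 0.
  move=> i; rewrite sumrB hw.2.
  have -> : \sum_(S in B | i \in S) (if S \in B'' then mu S else 0) = \sum_(S in B'' | i \in S) mu S.
    rewrite big_mkcond [RHS]big_mkcond; apply: eq_bigr => S _.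
    case: (boolP (S \in B'')) => h; last by case: (_ && _).
    by rewrite (subsetP hsub _ h).
  by rewrite hmu.2 subrr.
have hS : exists2 S0, S0 \in B & d S0 != 0.
  case/properP: hp => _ [S0 S0B S0n]; exists S0 => //.
  by rewrite /d (negbTE S0n) sub0r oppr_eq0 gt_eqF // hw.1.
have [B1 [w1 [hp1 hb1 hc1]]] := split_lem h0 hw hd hS hc.
apply: (IH B1 _ w1) => //.
  by apply: leq_trans (proper_card hp1) _; rewrite -ltnS.
by apply: contra h0; exact: (subsetP (proper_sub hp1)).
Qed.

End Red.



Section Core.
Variables (R : realFieldType) (n : nat).

Lemma core_nonempty (v : {set 'I_n} -> R) : (0 < n)%N -> is_game v ->
  (forall B, Bstar R B -> Bsum B v <= v setT) -> exists x, in_core v x.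
Proof.
move=> hn hv hBG; rewrite /is_game in hv. apply: NNPP => Hno.
pose a (o : ({set 'I_n} + unit)%type) (k : nat) : R :=
  match o with inl T0 => if (insub k : option 'I_n) is Some i then (i \in T0)%:R else 0
             | inr _ => -1 end.
pose b (o : ({set 'I_n} + unit)%type) : R :=
  match o with inl T0 => v T0 | inr _ => - v setT end.
have aS : forall S (i : 'I_n), a (inl S) i = (i \in S)%:R by move=> S i; rewrite /= valK.
have dotS : forall S x, dot n (a (inl S)) x = \sum_(i in S) x (val i).
  move=> S x; rewrite /dot [RHS]big_mkcond; apply: eq_bigr => i _.
  by rewrite aS; case: (i \in S); rewrite ?mul1r ?mul0r.
have dotT : forall x, dot n (a (inr tt)) x = - \sum_(i < n) x i.
  by move=> x; rewrite /dot -sumrN; apply: eq_bigr => i _ /=; rewrite mulN1r.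
have Hinf : forall x, exists o, dot n (a o) x < b o.
  move=> x; apply: NNPP => H; apply: Hno. exists (\row_i x (val i)).
  have Hall : forall o, b o <= dot n (a o) x.
    by move=> o; rewrite leNgt; apply/negP => h; apply: H; exists o.
  split.
    move=> S; have := Hall (inl S); rewrite dotS /=.
    move=> h; apply: (le_trans h); rewrite le_eqVlt; apply/orP; left; apply/eqP; apply: eq_bigr => i _; by rewrite mxE.
  under eq_bigr do rewrite mxE.
  have hsT : \sum_(i in [set: 'I_n]) x (val i) = \sum_(i : 'I_n) x (val i).
    by apply: eq_bigl => i; rewrite inE.
  have := Hall (inl setT); have := Hall (inr tt). rewrite dotS dotT hsT /=. lra.
have [y [y0 [ya yb]]] := farkas Hinf.
have sumI : forall F : ({set 'I_n} + unit)%type -> R,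
    \sum_o F o = \sum_(S : {set 'I_n}) F (inl S) + F (inr tt).
  move=> F; rewrite big_sumType /=; congr (_ + _).
  by rewrite (big_pred1 tt) // => [[]].
set Y := y (inr tt).
have hcov : forall i : 'I_n, \sum_(S : {set 'I_n} | i \in S) y (inl S) = Y.
  move=> i. have := ya i (ltn_ord i). rewrite sumI.
  have -> : \sum_(S : {set 'I_n}) y (inl S) * a (inl S) i = \sum_(S : {set 'I_n} | i \in S) y (inl S).
    rewrite [RHS]big_mkcond; apply: eq_bigr => S _; rewrite aS.
    by case: (i \in S); rewrite ?mulr1 ?mulr0.
  rewrite /= /Y. lra.
have hobj : 0 < \sum_(S : {set 'I_n}) y (inl S) * v S - Y * v setT.
  move: yb; rewrite sumI /= /Y. lra.
have hY : 0 < Y.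
  rewrite lt_def y0 andbT. apply/eqP => hY0.
  have hz : forall S, y (inl S) * v S = 0.
    move=> S. case: (set_0Vmem S) => [->|[i iS]]; first by rewrite hv mulr0.
    have := hcov i; rewrite hY0 => H.
    have := psumr_eq0P (fun T _ => y0 (inl T)) H iS. by move=> ->; rewrite mul0r.
  move: hobj; rewrite big1 // hY0 mul0r subrr ltxx //.
pose w S := y (inl S) / Y.
pose B := [set S | (S != set0) && (0 < w S)].
have hw0 : forall S, 0 <= w S by move=> S; rewrite divr_ge0 // ltW.
have hB0 : set0 \notin B by rewrite inE eqxx.
have hbw : balancing_weights B w.
  split; first by move=> S; rewrite inE => /andP[].
  move=> i. transitivity (\sum_(S : {set 'I_n} | i \in S) w S).
    rewrite big_mkcond [RHS]big_mkcond; apply: eq_bigr => S _. rewrite inE.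
    case iS: (i \in S); rewrite ?andbF ?andbT //.
    have -> : S != set0 by apply/set0Pn; exists i.
    case: ltP => //= h. by apply/le_anti; rewrite h hw0.
  by rewrite /w -big_distrl /= hcov mulfV // gt_eqF.
have hcB : v setT < \sum_(S in B) w S * v S.
  have -> : \sum_(S in B) w S * v S = (\sum_(S : {set 'I_n}) y (inl S) * v S) / Y.
    rewrite big_distrl /= big_mkcond; apply: eq_bigr => S _ /=.
    have -> : y (inl S) * v S / Y = w S * v S by rewrite /w mulrAC.
    rewrite inE. case: (set_0Vmem S) => [->|[i iS]]; first by rewrite eqxx /= hv mulr0.
    have -> : S != set0 by apply/set0Pn; exists i.
    case: ltP => //= h. have -> : w S = 0 by apply/le_anti; rewrite h hw0.
    by rewrite mul0r.
  rewrite ltr_pdivlMr //. lra.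
have [B' [hm hlt]] := reduce hB0 hbw hcB.
have : Bstar R B'.
  split => // hT. move: hlt. have hl := bal_lambdaB hm.1. rewrite hT in hl.
  rewrite hT /Bsum big_set1.
  have := hl.2 (Ordinal hn). rewrite (big_pred1 [set: 'I_n]); last first.
    by move=> S /=; rewrite in_set1; case: eqP => // ->; rewrite in_setT.
  by move=> ->; rewrite mul1r ltxx.
move/hBG. by rewrite leNgt hlt.
Qed.

End Core.



Lemma charmx_mul (R : realFieldType) (n : nat) (U : {set {set 'I_n}}) (x : 'rV[R]_n) r :
  (x *m (charmx R U)^T) 0 r = \sum_(i in enum_val r) x 0 i.
Proof.
rewrite !mxE [RHS]big_mkcond; apply: eq_bigr => j _. rewrite !mxE.
by case: (j \in enum_val r); rewrite ?mulr1 ?mulr0.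
Qed.

Unset Implicit Arguments.
Theorem theorem18 (R : realFieldType) (n p : nat) (hn : (0 < n)%N) (hp : (0 < p)%N)
    (B : 'I_p -> {set {set 'I_n}}) (hB : forall k, Bstar R (B k)) :
  (forall v : {set 'I_n} -> R, (forall k, facet (B k) v) -> core_singleton v) <->
  \rank (charmx R (\bigcup_(k < p) B k)) = n.
Proof.
set U := \bigcup_(k < p) B k.
set M := charmx R U.
have hl : forall k, balancing_weights (B k) (lambdaB R (B k)).
  by move=> k; apply: bal_lambdaB; case: (hB k) => [[]].
split.
  move=> H. apply: NNPP => hr.
  have hnf : ~~ row_free M^T by rewrite /row_free mxrank_tr; apply/eqP.
  rewrite -kermx_eq0 in hnf. case/rowV0Pn: hnf => u hu unz.
  have hu0 : u *m M^T = 0 by apply/sub_kermxP.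
  have hU : forall S, S \in U -> \sum_(i in S) u 0 i = 0.
    move=> S SU. have := charmx_mul (U:=U) u (enum_rank_in SU S).
    by rewrite enum_rankK_in // hu0 mxE => <-.
  have hN : \sum_i u 0 i = 0.
    rewrite -(bal_sum (fun i => u 0 i) (hl (Ordinal hp))) big1 // => S SB.
    rewrite hU ?mulr0 //; apply/bigcupP; by exists (Ordinal hp).
  pose v := fun S : {set 'I_n} => - `|\sum_(i in S) u 0 i|.
  have vT : v setT = 0.
    rewrite /v. have -> : \sum_(i in [set: 'I_n]) u 0 i = \sum_i u 0 i.
      by apply: eq_bigl => i; rewrite inE.
    by rewrite hN normr0 oppr0.
  have hv : forall k, facet (B k) v.
    move=> k; split; first split.
    - by rewrite /is_game /v big_set0 normr0 oppr0.
    - move=> B0 hB0. rewrite vT. apply: sumr_le0 => S SB.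
      apply: mulr_ge0_le0; last by rewrite /v oppr_le0 normr_ge0.
      have hl0 := bal_lambdaB (hB0.1.1). by rewrite ltW // hl0.1.
    - rewrite vT /Bsum big1 // => S SB. rewrite /v hU ?normr0 ?oppr0 ?mulr0 //.
      apply/bigcupP; by exists k.
  have [x [hx hxu]] := H v hv.
  have c0 : in_core v 0.
    split; last by rewrite vT big1 // => i _; rewrite mxE.
    move=> S; rewrite big1 => [|i _]; last by rewrite mxE.
    by rewrite /v oppr_le0 normr_ge0.
  have cu : in_core v u.
    split; last by rewrite vT hN.
    by move=> S; rewrite /v lerNl -normrN ler_norm.
  move/eqP: unz; apply. by rewrite (hxu _ cu) (hxu _ c0).
move=> hr v hv.
have hBG := (hv (Ordinal hp)).1.
have [x hx] := core_nonempty hn hBG.1 hBG.2.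
have tight : forall z, in_core v z -> forall k S, S \in B k -> \sum_(i in S) z 0 i = v S.
  move=> z hz k S SB.
  have H0 : \sum_(T in B k) lambdaB R (B k) T * (\sum_(i in T) z 0 i - v T) = 0.
    rewrite (eq_bigr (fun T => lambdaB R (B k) T * \sum_(i in T) z 0 i - lambdaB R (B k) T * v T)); last first.
      by move=> T _; rewrite mulrBr.
    rewrite sumrB (bal_sum (fun i => z 0 i) (hl k)) hz.2.
    by have := (hv k).2; rewrite /Bsum => ->; rewrite subrr.
  have hpos : forall T, T \in B k -> 0 <= lambdaB R (B k) T * (\sum_(i in T) z 0 i - v T).
    move=> T TB; apply: mulr_ge0; first by rewrite ltW // (hl k).1.
    by rewrite subr_ge0 hz.1.
  have := psumr_eq0P hpos H0 SB. move/eqP; rewrite mulf_eq0 => /orP[|].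
    by rewrite gt_eqF // (hl k).1.
  by rewrite subr_eq0 => /eqP.
exists x; split => // y hy.
have hrf : row_free M^T by rewrite /row_free mxrank_tr hr.
apply: (row_free_inj hrf) => /=. apply/eqP; rewrite -subr_eq0 -mulmxBl; apply/eqP.
apply/rowP => r. rewrite charmx_mul mxE.
have := enum_valP r => /bigcupP [k _ hk].
rewrite (eq_bigr (fun i => y 0 i - x 0 i)); last by move=> i _; rewrite !mxE.
by rewrite sumrB (tight _ hy k _ hk) (tight _ hx k _ hk) subrr.
Qed.
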